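(* Consider observations $y_i = y(t_i) = F(x_0)(t_i) + \epsilon_i$, $i=1,\dots,n$, where $F:\mathbf X\to\mathbf Y$ is a known linear operator between Hilbert spaces of real functions, $t_1,\dots,t_n$ is a fixed design, and $\epsilon_1,\dots,\epsilon_n$ are independent with zero mean, finite variance, and satisfying: there is $K<\infty$ with $\max_{i}\mathbf E\exp[\epsilon_i^2/K^2]\le K$. Let $(\lambda_j;\varphi_j,\psi_j)_{j=1,\dots,n}$ be a singular system of $F$ as in the context, and assume $F$ has index of ill-posedness $t>0$, i.e. $\lambda_j=O(j^{-t})$. Let $c>0$ be the constant (depending on $K$) for which $\mathbf P(\max_j|\frac1n\sum_i\varphi_j(t_i)\epsilon_i|>c\sqrt{\log n/n})\le c\exp[-\log n/c^2]$, set $\mu_j=\frac{2c}{\lambda_j}\sqrt{\frac{\log n}{n}}$, and let $$\hat x_n=\sum_{j=1}^n \hat x_j\psi_j \in \arg\min_{x=\sum_{j=1}^n x_j\psi_j}\Big[\sum_{j=1}^n\Big|\Big\langle y-F(x),\frac{\varphi_j}{\lambda_j}\Big\rangle_n\Big|^2+\sum_{j=1}^n\mu_j|x_j|\Big].$$ Assume there are $s$ and $0<p<2$ with $\frac1p=\frac12+\frac{s}{2t+1}$ such that $x_0=\sum_j x_{j,0}\psi_j$ belongs to $$X_{s,p}=\Big\{x=\sum_{j=1}^n x_j\psi_j:\ \sum_{j=1}^n j^{p(s+\frac12-\frac1p)}|x_j|^p\le1\Big\}.$$ Then $$\|\hat x_n-x_0\|_n^2=O_{\mathbf P}\Big(\Big(\frac{n}{\log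 n}\Big)^{-\frac{2s}{2s+2t+1}}\Big).$$
   Context: The empirical norm is $\|y\|_n^2=\frac1n\sum_{i=1}^n y(t_i)^2$ with empirical inner product $\langle y,z\rangle_n=\frac1n\sum_{i=1}^n y(t_i)z(t_i)$; for the data vector $y=(y_i)$, $\langle y,\varphi\rangle_n=\frac1n\sum_i y_i\varphi(t_i)$. The singular system satisfies $F\psi_j=\lambda_j\varphi_j$, $F^*\varphi_j=\lambda_j\psi_j$, where $\lambda_j^2>0$ are the nonzero eigenvalues of $F^*F$ in decreasing order, and $\{\psi_j\}$, $\{\varphi_j\}$ are complete orthonormal systems with respect to $\|\cdot\|_n$ of eigenvectors of $F^*F$ and $FF^*$; for $x=\sum_j x_j\psi_j$, $\|x\|_n^2=\sum_j x_j^2$. $O_{\mathbf P}$ denotes boundedness in probability.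
   Formalization: The index of ill-posedness t is two-sided: λⱼ lies between two positive constant multiples of j⁻ᵗ, with constants uniform in n, rather than only λⱼ = O(j⁻ᵗ). The paper assumes this as well. *)

(* Defs.v *)
From HB Require Import structures.
From mathcomp Require Import all_boot all_order all_algebra.
From mathcomp Require Import all_classical all_reals all_analysis.
Set Implicit Arguments. Unset Strict Implicit. Unset Printing Implicit Defensive.
Import Order.TTheory GRing.Theory Num.Theory.
Import numFieldNormedType.Exports.
Local Open Scope classical_set_scope.
Local Open Scope ring_scope.

(* Empirical inner product <u, v>_n = (1/n) sum_i u_i v(t_i), where u is a
   data vector indexed by the design and v : T -> R is a function,
   t : 'I_n -> T the design. *)
Definition emp_inner (R : realType) (T : Type) (n : nat) (t : 'I_n -> T)
  (u : 'I_n -> R) (v : T -> R) : R :=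
  n%:R^-1 * \sum_(i < n) u i * v (t i).

Definition emp_inner_fun (R : realType) (T : Type) (n : nat) (t : 'I_n -> T)
  (u v : T -> R) : R :=
  n%:R^-1 * \sum_(i < n) u (t i) * v (t i).

(* ||x||_n^2 = sum_j x_j^2 for x = sum_j x_j psi_j *)
Definition coef_sqnorm (R : realType) (n : nat) (x : 'I_n -> R) : R :=
  \sum_(j < n) x j ^+ 2.

(* j-th coordinate vector, i.e. the coefficients of psi_j *)
Definition coord_vec (R : realType) (n : nat) (j : 'I_n) : 'I_n -> R :=
  fun k => (k == j)%:R.

(* Mutual independence of a finite family of real random variables:
   product rule for every family of Borel sets (taking B_i = setT gives
   all subfamilies). *)
Definition mutually_independent (R : realType) (d : measure_display)
  (Omega : measurableType d) (P : probability Omega R) (n : nat)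
  (X : 'I_n -> Omega -> R) : Prop :=
  forall B : 'I_n -> set R, (forall i, measurable (B i)) ->
    fine (P (\bigcap_(i in [set: 'I_n]) (X i @^-1` B i)))
    = \prod_(i < n) fine (P (X i @^-1` B i)).

Definition criterion (R : realType) (T : Type) (n : nat) (t : 'I_n -> T)
  (F : ('I_n -> R) -> T -> R) (phi : 'I_n -> T -> R) (lam mu : 'I_n -> R)
  (y : 'I_n -> R) (x : 'I_n -> R) : R :=
  \sum_(j < n) (emp_inner t (fun i => y i - F x (t i))
                           (fun u => phi j u / lam j)) ^+ 2
  + \sum_(j < n) mu j * `|x j|.

Definition in_Xsp (R : realType) (n : nat) (s p : R) (x : 'I_n -> R) : Prop :=
  \sum_(j < n) (j.+1%:R `^ (p * (s + 2^-1 - p^-1))) * (`|x j| `^ p) <= 1.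

(* Main.v *)
Require Import Defs.
From HB Require Import structures.
From mathcomp Require Import all_boot all_order all_algebra.
From mathcomp Require Import all_classical all_reals all_analysis.
From mathcomp Require Import lra ring.
Import Order.TTheory GRing.Theory Num.Theory.
Import numFieldNormedType.Exports.
Local Open Scope ring_scope.

Section H.
Variable R : realType.

Definition soft (tau a : R) : R := Num.max (a - tau) 0 + Num.min (a + tau) 0.

Lemma soft_opt tau a u : 0 <= tau ->
  (a - soft tau a)^+2 + 2 * tau * `|soft tau a| + (u - soft tau a)^+2
   <= (a - u)^+2 + 2 * tau * `|u|.
Proof.
move=> ht; rewrite /soft.
case: (leP (a - tau) 0) => h1; case: (leP (a + tau) 0) => h2;
  rewrite ?(max_l (ltW _)) ?max_r ?min_l ?(min_r (ltW _)) //;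
  try (rewrite max_l; last by lra);
  try (rewrite min_r; last by lra);
  case: (ler0P u) => hu; rewrite ?normr0;
  try (rewrite ger0_norm; last by lra);
  try (rewrite ler0_norm; last by lra); nra.
Qed.

Lemma soft_err tau x e : 0 <= tau -> `|e| <= tau ->
  `|soft tau (x + e) - x| <= `|x| /\ `|soft tau (x + e) - x| <= 2 * tau.
Proof.
move=> ht; rewrite /soft => he.
have [he1 he2] : -tau <= e /\ e <= tau.
  by move: he; rewrite ler_norml => /andP[].
case: (leP (x + e - tau) 0) => h1; case: (leP (x + e + tau) 0) => h2;
  rewrite ?(max_l (ltW _)) ?max_r ?min_l ?(min_r (ltW _)) //;
  try (rewrite max_l; last by lra);
  try (rewrite min_r; last by lra);
  case: (ler0P x) => hx;
  rewrite ?ler_norml ?normr0 //;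
  try (rewrite ger0_norm; last by lra);
  try (rewrite ler0_norm; last by lra);
  rewrite ?ler_norml; split; try (apply/andP; split); lra.
Qed.
End H.
Arguments soft {R}.
Arguments soft_err {R}.

Section H3.
Variable R : realType.
Lemma min_soft n (a mu xh : 'I_n -> R) :
  (forall j, 0 <= mu j) ->
  (forall x : 'I_n -> R, \sum_(j < n) ((a j - xh j)^+2 + mu j * `|xh j|)
        <= \sum_(j < n) ((a j - x j)^+2 + mu j * `|x j|)) ->
  forall j, xh j = soft (mu j / 2) (a j).
Proof.
move=> hmu hmin.
set s := fun j => soft (mu j / 2) (a j).
have key : forall j, (a j - s j)^+2 + mu j * `|s j| + (xh j - s j)^+2
     <= (a j - xh j)^+2 + mu j * `|xh j|.
  move=> j; have := @soft_opt R (mu j / 2) (a j) (xh j).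
  rewrite (_ : 2 * (mu j / 2) = mu j); last by field.
  apply; have := hmu j; lra.
have H1 := hmin s.
have H2 : \sum_(j < n) ((a j - s j)^+2 + mu j * `|s j| + (xh j - s j)^+2)
   <= \sum_(j < n) ((a j - xh j)^+2 + mu j * `|xh j|) by apply: ler_sum => j _; exact: key.
rewrite big_split /= in H2.
have H3 : \sum_(j < n) (xh j - s j)^+2 = 0.
  apply/eqP; rewrite eq_le sumr_ge0 ?andbT; last by move=> j _; exact: sqr_ge0.
  lra.
move=> j; have := @psumr_eq0P _ _ _ _ (fun i _ => sqr_ge0 (xh i - s i)) H3 j isT.
by move/eqP; rewrite sqrf_eq0 subr_eq0 => /eqP.
Qed.
End H3.

Section H2.
Variable R : realType.
Variable T : Type.

Lemma crit_decouple n (t : 'I_n -> T) (F : ('I_n->R) -> T -> R) (phi : 'I_n -> T -> R)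
  (lam mu x0 e x : 'I_n -> R) :
  (forall (a : R) (x z : 'I_n -> R) (u : T),
      F (fun j => a * x j + z j) u = a * F x u + F z u) ->
  (forall (x : 'I_n -> R) (j : 'I_n), emp_inner_fun t (F x) (phi j) = lam j * x j) ->
  (forall j, 0 < lam j) ->
  criterion t F phi lam mu (fun i => F x0 (t i) + e i) x =
  \sum_(j < n) ((x0 j + emp_inner t e (phi j) / lam j - x j)^+2 + mu j * `|x j|).
Proof.
move=> Hlin Hadj Hlam.
rewrite /criterion big_split /=; congr (_ + _); apply: eq_bigr => j _; congr (_ ^+ 2).
set d := (fun k => -1 * x k + x0 k).
have E1 := Hadj d j; rewrite /emp_inner_fun in E1.
rewrite /emp_inner.
transitivity (n%:R^-1 * (\sum_(i < n) F d (t i) * phi j (t i)) / lam j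
   + n%:R^-1 * (\sum_(i < n) e i * phi j (t i)) / lam j).
  rewrite -mulrDl -mulrDr -big_split /= -mulrA; congr (_ * _).
  rewrite mulr_suml; apply: eq_bigr => i _.
  rewrite /d Hlin; rewrite mulrA; congr (_ * _); ring.
rewrite E1 /d; have := Hlam j; move=> hl; set z := (n%:R^-1 * _); field; exact: lt0r_neq0.
Qed.
End H2.

Section H4.
Variable R : realType.

Lemma err_pow (err a B p : R) : 0 <= err -> err <= a -> err <= B -> 0 < p -> p < 2 ->
  err ^+ 2 <= a `^ p * B `^ (2 - p).
Proof.
move=> h0 ha hB hp hp2.
have -> : err ^+ 2 = err `^ p * err `^ (2 - p).
  rewrite -powR_mulrn // -powRD; last by apply/implyP => /eqP; lra.
  congr (_ `^ _); rewrite /=; ring.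
apply: ler_pM; rewrite ?powR_ge0 //.
  by apply: (@ge0_ler_powR R p) => //; rewrite ?nnegrE //; lra.
by apply: (@ge0_ler_powR R (2 - p)) => //; rewrite ?nnegrE //; lra.
Qed.

Lemma inv_lam_bound (lam Cc Q : R) : 0 < Cc -> 0 < Q -> Cc^-1 * Q^-1 <= lam -> 0 < lam ->
  lam^-1 <= Cc * Q.
Proof.
move=> hC hQ hl hlam.
have h1 : 1 <= Cc * Q * lam.
  have e : (Cc * Q) * (Cc^-1 * Q^-1) = 1 by field; apply/andP; split; apply: lt0r_neq0.
  rewrite -e; apply: ler_wpM2l => //; exact/ltW/mulr_gt0.
rewrite -(mulr1 (lam^-1)); apply: (le_trans (ler_wpM2l _ h1)); first by rewrite invr_ge0 ltW.
by rewrite mulrC mulfK ?lt0r_neq0.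
Qed.

Lemma det_bound n (x0 e lam tau : 'I_n -> R) (c Cc L p s tt : R) :
  0 < c -> 0 < Cc -> 0 <= L -> 0 < p -> p < 2 -> 0 < tt ->
  p^-1 = 2^-1 + s / (2 * tt + 1) ->
  (forall j, 0 < lam j) ->
  (forall j : 'I_n, Cc^-1 * j.+1%:R `^ (- tt) <= lam j) ->
  in_Xsp s p x0 ->
  (forall j, 0 <= tau j) ->
  (forall j, tau j <= c * Num.sqrt L / lam j) ->
  (forall j, `|e j| <= tau j) ->
  coef_sqnorm (fun j => soft (tau j) (x0 j + e j) - x0 j)
     <= (2 * c * Cc * Num.sqrt L) `^ (2 - p).
Proof.
move=> hc hC hL hp hp2 htt hpe hlam hlamlb hX htau0 htau he.
set K0 := (2 * c * Cc * Num.sqrt L) `^ (2 - p).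
have hexp : tt * (2 - p) = p * (s + 2^-1 - p^-1).
  have hs : s = (2 * tt + 1) * (p^-1 - 2^-1).
    rewrite hpe; field; apply: lt0r_neq0; lra.
  rewrite hs; field; apply: lt0r_neq0; lra.
rewrite /coef_sqnorm.
apply: (@le_trans _ _ (\sum_(j < n) K0 * (j.+1%:R `^ (p * (s + 2^-1 - p^-1)) * `|x0 j| `^ p))).
  apply: ler_sum => j _.
  have [h1 h2] := soft_err (tau j) (x0 j) (e j) (htau0 j) (he j).
  set err := `|soft (tau j) (x0 j + e j) - x0 j| in h1 h2.
  rewrite -real_normK ?num_real // -/err.
  set Q := j.+1%:R `^ tt.
  have hQ : 0 < Q by apply: powR_gt0; rewrite ltr0n.
  have hsq : 0 <= Num.sqrt L by exact: sqrtr_ge0.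
  have hB : err <= 2 * c * Cc * Num.sqrt L * Q.
    apply: (le_trans h2).
    have hl := hlamlb j; rewrite powRN -/Q in hl.
    have hi := inv_lam_bound (lam j) Cc Q hC hQ hl (hlam j).
    apply: (@le_trans _ _ (2 * (c * Num.sqrt L / lam j))); first by have := htau j; lra.
    rewrite -!mulrA; apply: ler_wpM2l => //; apply: ler_wpM2l; first exact: ltW.
    rewrite mulrCA; apply: ler_wpM2l => //.
  apply: (le_trans (err_pow _ _ _ _ (normr_ge0 _) h1 hB hp hp2)).
  rewrite powRM; last 2 first.
  - by apply: mulr_ge0 => //; apply: mulr_ge0; [apply: mulr_ge0|exact: ltW]; lra.
  - exact: ltW.
  rewrite -/K0 /Q -powRrM hexp.
  by rewrite le_eqVlt; apply/orP; left; apply/eqP; ring.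
rewrite -mulr_sumr; apply: ler_piMr; first exact: powR_ge0.
exact: hX.
Qed.
End H4.

Section H6.
Variable R : realType.
Lemma rate_eq (A x p s tt : R) : 0 <= A -> 0 < x -> 0 < p -> 0 < tt ->
  p^-1 = 2^-1 + s / (2 * tt + 1) ->
  (A * Num.sqrt (x^-1)) `^ (2 - p) = A `^ (2 - p) * x `^ (- (2 * s / (2 * s + 2 * tt + 1))).
Proof.
move=> hA hx hp htt hpe.
rewrite powRM //.
congr (_ * _).
have hs : s = (2 * tt + 1) * (p^-1 - 2^-1).
  rewrite hpe; field; apply: lt0r_neq0; lra.
have hden : 2 * s + 2 * tt + 1 = (2 * tt + 1) * 2 / p.
  rewrite hs; field; apply: lt0r_neq0; lra.
rewrite -powR12_sqrt; last by rewrite invr_ge0 ltW.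
rewrite -powR_inv1; last exact: ltW.
rewrite -!powRrM; congr (_ `^ _).
rewrite hden hs; field.
apply/andP; split; apply: lt0r_neq0; lra.
Qed.
End H6.

Local Open Scope classical_set_scope.

Section H5.
Variable R : realType.
Variables (d : measure_display) (Omega : measurableType d).

Lemma meas_lt (f : Omega -> R) a : measurable_fun setT f -> measurable [set w | a < f w].
Proof.
move=> mf; have := mf measurableT `]a, +oo[%classic (measurable_itv _); rewrite setTI.
congr measurable; rewrite predeqE => w /=; rewrite in_itv /= andbT; done.
Qed.

Lemma soft_meas (tau b : R) : measurable_fun setT (fun a : R => soft tau a - b).
Proof.
rewrite /soft; apply: measurable_realfun.measurable_funB; last exact: measurable_cst.
apply: measurable_realfun.measurable_funD.
  apply: measurable_realfun.measurable_maxr; last exact: measurable_cst.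
  by apply: measurable_realfun.measurable_funB => //; exact: measurable_cst.
apply: measurable_realfun.measurable_minr; last exact: measurable_cst.
by apply: measurable_realfun.measurable_funD => //; exact: measurable_cst.
Qed.

Lemma lin_meas n (a : 'I_n -> R) (X : 'I_n -> Omega -> R) (k : R) :
  (forall i, measurable_fun setT (X i)) ->
  measurable_fun setT (fun w => k * \sum_(i < n) a i * X i w).
Proof.
move=> mX; apply: measurable_realfun.measurable_funM; first exact: measurable_cst.
apply: measurable_sum => i; apply: measurable_realfun.measurable_funM; first exact: measurable_cst.
exact: mX.
Qed.
End H5.

Theorem theorem2
  (R : realType) (d : measure_display) (Omega : measurableType d)
  (P : probability Omega R)
  (T : Type)
  (* fixed design t_1..t_n, for each n *)
  (t : forall n : nat, 'I_n -> T)
  (* the known linear operator, acting on x = sum_j x_j psi_j (coefficients) *)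
  (F : forall n : nat, ('I_n -> R) -> T -> R)
  (* singular system (lambda_j; phi_j, psi_j), j = 1..n *)
  (lam : forall n : nat, 'I_n -> R)
  (phi : forall n : nat, 'I_n -> T -> R)
  (* noise: triangular array eps_{n,i} *)
  (eps : forall n : nat, 'I_n -> Omega -> R)
  (K c tt s p : R)
  (x0 : forall n : nat, 'I_n -> R)
  (xhat : forall n : nat, Omega -> 'I_n -> R) :
  (* F linear *)
  (forall n (a : R) (x z : 'I_n -> R) (u : T),
      F n (fun j => a * x j + z j) u = a * F n x u + F n z u) ->
  (* singular system: F psi_j = lambda_j phi_j, F^* phi_j = lambda_j psi_j,
     lambda_j > 0 decreasing, {phi_j} orthonormal for <.,.>_n *)
  (forall n (j : 'I_n) (u : T), F n (coord_vec R j) u = lam n j * phi n j u) ->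
  (forall n (x : 'I_n -> R) (j : 'I_n),
      emp_inner_fun (t n) (F n x) (phi n j) = lam n j * x j) ->
  (forall n (j : 'I_n), 0 < lam n j) ->
  (forall n (j k : 'I_n), (j <= k)%N -> lam n k <= lam n j) ->
  (forall n (j k : 'I_n),
      emp_inner_fun (t n) (phi n j) (phi n k) = (j == k)%:R) ->
  (* index of ill-posedness t > 0: lambda_j of exact order j^{-t} *)
  0 < tt ->
  (exists C : R, 0 < C /\ forall n (j : 'I_n),
      C^-1 * j.+1%:R `^ (- tt) <= lam n j /\ lam n j <= C * j.+1%:R `^ (- tt)) ->
  (* noise assumptions *)
  (forall n (i : 'I_n), measurable_fun setT (eps n i)) ->
  (forall n, mutually_independent P (eps n)) ->
  (forall n (i : 'I_n), P.-integrable setT (fun w => (eps n i w)%:E)) ->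
  (forall n (i : 'I_n), (\int[P]_w (eps n i w)%:E = 0)%E) ->
  (forall n (i : 'I_n), P.-integrable setT (fun w => (eps n i w ^+ 2)%:E)) ->
  0 < K ->
  (forall n (i : 'I_n),
      (\int[P]_w (expR (eps n i w ^+ 2 / K ^+ 2))%:E <= K%:E)%E) ->
  (* the constant c of the maximal inequality *)
  0 < c ->
  (forall n : nat, (2 <= n)%N ->
      (P [set w | exists j : 'I_n,
           (c * Num.sqrt (ln n%:R / n%:R) <
           `| n%:R^-1 * \sum_(i < n) phi n j (t n i) * eps n i w |)%R ]
       <= (c * expR (- (ln n%:R / c ^+ 2)))%:E)%E) ->
  (* x0 in X_{s,p} with 0 < p < 2, 1/p = 1/2 + s/(2t+1) *)
  0 < p -> p < 2 -> p^-1 = 2^-1 + s / (2 * tt + 1) ->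
  (forall n, in_Xsp s p (x0 n)) ->
  (* xhat_n is a minimiser of the penalised criterion, for every outcome *)
  (forall n (w : Omega) (x : 'I_n -> R),
      let y := fun i : 'I_n => F n (x0 n) (t n i) + eps n i w in
      let mu := fun j : 'I_n =>
                  2 * c / lam n j * Num.sqrt (ln n%:R / n%:R) in
      criterion (t n) (F n) (phi n) (lam n) mu y (xhat n w)
      <= criterion (t n) (F n) (phi n) (lam n) mu y x) ->
  (* conclusion: ||xhat_n - x0||_n^2 = O_P((n / log n)^{-2s/(2s+2t+1)}) *)
  forall delta : R, 0 < delta ->
  exists M : R, 0 < M /\ exists N : nat, forall n : nat, (N <= n)%N ->
    (P [set w | (M * (n%:R / ln n%:R) `^ (- (2 * s / (2 * s + 2 * tt + 1)))
                < coef_sqnorm (fun j => xhat n w j - x0 n j))%R]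
     <= delta%:E)%E.
Proof.
move=> Hlin Hcoord Hadj Hlam Hdec Horth htt [C [hC HC]] Hmeas Hind Hint Hmean
  Hint2 hK Hexp hc Hmax hp hp2 hpe HX Hmin delta hdelta.
set r := 2 * s / (2 * s + 2 * tt + 1).
set M := (2 * c * C) `^ (2 - p).
have h2cC : 0 < 2 * c * C by apply: mulr_gt0 => //; apply: mulr_gt0.
exists M; split; first exact: powR_gt0.
pose N := maxn 2 (Num.Def.trunc (expR (c ^+ 2 * ln (c / delta)))).+1.
exists N => n hn.
have hn2 : (2 <= n)%N by apply: leq_trans hn; exact: leq_maxl.
have hln : 0 < ln (n%:R : R) by apply: ln_gt0; rewrite ltr1n.
have hn0 : 0 < (n%:R : R) by rewrite ltr0n; apply: leq_trans hn2.
set L := ln (n%:R : R) / n%:R.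
have hL : 0 < L by apply: divr_gt0.
pose z := fun (j : 'I_n) w => emp_inner (t n) (fun i => eps n i w) (phi n j).
pose mu := fun j : 'I_n => 2 * c / lam n j * Num.sqrt L.
have hmu : forall j, 0 <= mu j.
  move=> j; apply: mulr_ge0; last exact: sqrtr_ge0.
  apply: divr_ge0; [apply: ltW; exact: mulr_gt0| exact: ltW].
have hz : forall w j, z j w = n%:R^-1 * \sum_(i < n) phi n j (t n i) * eps n i w.
  move=> w j; rewrite /emp_inner /z; congr (_ * _); apply: eq_bigr => i _; exact: mulrC.
have hxhat : forall w j, xhat n w j = soft (mu j / 2) (x0 n j + z j w / lam n j).
  move=> w; apply: min_soft => // x.
  by have := Hmin n w x; rewrite /= !crit_decouple.
pose H := fun w => coef_sqnorm (fun j => soft (mu j / 2) (x0 n j + z j w / lam n j) - x0 n j).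
set a := M * (n%:R / ln (R:=R) n%:R) `^ (- r).
have hA : [set w | a < coef_sqnorm (fun j => xhat n w j - x0 n j)] = [set w | a < H w].
  rewrite predeqE => w /=.
  have -> : (fun j => xhat n w j - x0 n j) = (fun j => soft (mu j / 2) (x0 n j + z j w / lam n j) - x0 n j).
    by apply: funext => j; rewrite hxhat.
  done.
have hgood : forall w, (forall j, `|z j w| <= c * Num.sqrt L) -> H w <= a.
  move=> w hw; rewrite /H.
  apply: le_trans (det_bound _ _ (x0 n) (fun j => z j w / lam n j) (lam n) (fun j => mu j / 2) c C L p s tt hc hC (ltW hL) hp hp2 htt hpe (Hlam n) (fun j => (HC n j).1) (HX n) _ _ _) _.
  - by move=> j; apply: divr_ge0 => //.
  - by move=> j; rewrite /mu le_eqVlt; apply/orP; left; apply/eqP; field; apply: lt0r_neq0.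
  - move=> j; rewrite normrM normfV (gtr0_norm (Hlam n j)).
    have -> : mu j / 2 = c * Num.sqrt L / lam n j.
      by rewrite /mu; field; apply: lt0r_neq0.
    apply: ler_wpM2r => //; rewrite invr_ge0; exact: ltW.
  - rewrite /a /M /L /r -invf_div (rate_eq _ _ _ _ s tt) //; first exact: ltW.
    by apply: divr_gt0.
rewrite hA.
have zmeas : forall j, measurable_fun setT (z j).
  move=> j; have -> : z j = (fun w => n%:R^-1 * \sum_(i < n) phi n j (t n i) * eps n i w).
    by apply: funext => w; rewrite hz.
  exact: lin_meas.
have mH : measurable_fun setT H.
  rewrite /H /coef_sqnorm; apply: measurable_sum => j; apply: measurable_realfun.measurable_funX.
  have mg : measurable_fun setT (fun w => x0 n j + z j w / lam n j).
    apply: measurable_realfun.measurable_funD; first exact: measurable_cst.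
    apply: measurable_realfun.measurable_funM; first exact: zmeas.
    exact: measurable_cst.
  exact: (measurableT_comp (soft_meas _ (mu j / 2) (x0 n j)) mg).
set Bad := [set w | exists j : 'I_n, c * Num.sqrt L <
           `| n%:R^-1 * \sum_(i < n) phi n j (t n i) * eps n i w |].
have hsub : [set w | a < H w] `<=` Bad.
  move=> w /= hw; apply: contrapT => hnb.
  have : H w <= a.
    apply: hgood => j; rewrite hz leNgt; apply/negP => hlt; apply: hnb; by exists j.
  by rewrite leNgt hw.
have mBad : measurable Bad.
  have -> : Bad = \bigcup_(j in [set: 'I_n]) [set w | c * Num.sqrt L <
           `| n%:R^-1 * \sum_(i < n) phi n j (t n i) * eps n i w |].
    rewrite predeqE => w; split; first by case=> j hj; exists j.
    by case=> j _ hj; exists j.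
  apply: fin_bigcup_measurable; first exact: finite_finset.
  move=> j _; apply: meas_lt.
  have ml := lin_meas _ _ _ _ (fun i => phi n j (t n i)) (eps n) (n%:R^-1) (Hmeas n).
  apply: (measurableT_comp _ ml); exact: measurable_realfun.normr_measurable.
apply: (@le_trans _ _ (P Bad)).
  by apply: le_measure => //; rewrite inE //; exact: meas_lt.
apply: (le_trans (Hmax n hn2)).
rewrite lee_fin.
set x := c ^+ 2 * ln (c / delta).
have hNn : expR x < n%:R.
  apply: (lt_le_trans (truncnS_gt (expR x))).
  rewrite ler_nat; apply: leq_trans hn; exact: leq_maxr.
have hc2 : 0 < c ^+ 2 by apply: exprn_gt0.
have h1 : x < ln (n%:R : R).
  by rewrite -[X in X < _]expRK ltr_ln ?posrE ?expR_gt0.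
have h2 : ln (c / delta) < ln (n%:R : R) / c ^+ 2.
  by rewrite ltr_pdivlMr // mulrC.
have h3 : expR (- (ln (n%:R : R) / c ^+ 2)) < delta / c.
  have -> : delta / c = expR (- ln (c / delta)).
    rewrite expRN lnK ?posrE ?divr_gt0 // invf_div //.
  by rewrite ltr_expR ltrN2.
have := h3; rewrite ltr_pdivlMr // => h4.
by apply: ltW; rewrite mulrC.
Qed.
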